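(* Let $\mathcal{H}$ be a Hilbert space of dimension $d$, let $\rho\in\mathcal{D}(\mathcal{H})$ be a known nominal state and $\alpha\in(0,1)$. Consider the one-sample quantum universal hypothesis testing problem: given $\sigma^{\otimes m}$ for an unknown $\sigma\in\mathcal{D}(\mathcal{H})$, test $H_0:\sigma=\rho$ against $H_1:\sigma\neq\rho$. Then there exist decision rules $M_m$ (depending only on $\rho$, $\alpha$, $m$, not on $\sigma$), using only independent measurements, such that for all sufficiently large $m$, $\alpha(M_m)\le\alpha$, and for every fixed $\sigma\neq\rho$ there is a constant $K$ (which may depend on $\rho,\sigma,\alpha,d$) such that for all sufficiently large $m$, $$\beta(M_m)\le\exp\!\left(-\frac{m\|\rho-\sigma\|_1^2}{86\,d^3}+K m^{1/2}\right).$$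
   Context: $\mathcal{D}(\mathcal{H})$ denotes the set of density operators on $\mathcal{H}$. A decision rule $M_m$ is a two-outcome POVM $\{E_0,E_1\}$ on $\mathcal{H}^{\otimes m}$ (outcome $0$: declare $H_0$; outcome $1$: declare $H_1$). ''Independent measurements'' means each of the $m$ copies is measured separately and the outcomes are classically processed. Type I error: $\alpha(M_m)=\mathrm{Tr}[\rho^{\otimes m}E_1]$; type II error (for the true state $\sigma$): $\beta(M_m)=\mathrm{Tr}[\sigma^{\otimes m}E_0]$. $\|X\|_1=\mathrm{Tr}\sqrt{X^\dagger X}$ is the trace norm. *)

(* Defs.v *)
From HB Require Import structures.
From mathcomp Require Import all_boot all_order all_algebra.
From mathcomp Require Import complex.
From mathcomp Require Import all_classical all_reals.
From mathcomp Require Import sequences exp.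
Set Implicit Arguments. Unset Strict Implicit. Unset Printing Implicit Defensive.
Import Order.TTheory GRing.Theory Num.Theory.
Local Open Scope ring_scope.

Section Quantum.
Variable R : realType.
Local Notation C := R[i].

Definition hadj (n m : nat) (A : 'M[C]_(n, m)) : 'M[C]_(m, n) :=
  (map_mx (fun z : C => z^*) A)^T.

(* positive semidefinite: <v, A v> >= 0 for every vector v (in C, 0 <= z means
   z is a nonnegative real), together with hermiticity. *)
Definition psd (d : nat) (A : 'M[C]_d) : Prop :=
  hadj A = A /\ forall v : 'cV[C]_d, 0 <= (hadj v *m A *m v) 0 0.

Definition density (d : nat) (A : 'M[C]_d) : Prop := psd A /\ \tr A = 1.

Definition psd_sqrt (d : nat) (A : 'M[C]_d) : 'M[C]_d :=
  xget 0 [set B : 'M[C]_d | psd B /\ B *m B = A].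

Definition trace_norm (d : nat) (X : 'M[C]_d) : R :=
  complex.Re (\tr (psd_sqrt (hadj X *m X))).

(* Operators on H^{(x)m}: H^{(x)m} has orthonormal basis indexed by
   {ffun 'I_m -> 'I_d}; an operator is given by its matrix entries. *)
Definition tidx (d m : nat) := {ffun 'I_m -> 'I_d}.
Definition top (d m : nat) := tidx d m -> tidx d m -> C.

Definition tens (d m : nat) (A : 'I_m -> 'M[C]_d) : top d m :=
  fun x y => \prod_(i < m) A i (x i) (y i).

Definition tpow (d : nat) (rho : 'M[C]_d) (m : nat) : top d m :=
  tens (fun _ => rho).
Arguments tpow {d} rho m : rename.

Definition top_id (d m : nat) : top d m := fun x y => (x == y)%:R.

Definition tr_mul (d m : nat) (A B : top d m) : C :=
  \sum_(x : tidx d m) \sum_(z : tidx d m) A x z * B z x.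

Definition povm (d k : nat) (F : 'I_k -> 'M[C]_d) : Prop :=
  (forall o, psd (F o)) /\ \sum_(o < k) F o = 1%:M.

(* A decision rule on H^{(x)m} using only independent measurements:
   copy i is measured with its own POVM F i (finitely many outcomes, padded
   to a common outcome set 'I_k), and the outcome string x is classically
   (possibly randomly) processed: H_1 is declared with probability g x. *)
Record indep_rule (d m : nat) := IndepRule {
  ir_k : nat;
  ir_F : 'I_m -> 'I_ir_k -> 'M[C]_d;
  ir_g : {ffun 'I_m -> 'I_ir_k} -> R;
  ir_povm : forall i, povm (ir_F i);
  ir_g01 : forall x, 0 <= ir_g x <= 1
}.
Arguments ir_k {d m} M : rename.
Arguments ir_F {d m} M _ _ : rename.
Arguments ir_g {d m} M _ : rename.

Definition rule_E1 (d m : nat) (M : indep_rule d m) : top d m :=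
  fun x y => \sum_(o : {ffun 'I_m -> 'I_(ir_k M)})
     (Complex (ir_g M o) 0 * tens (fun i => ir_F M i (o i)) x y).
Definition rule_E0 (d m : nat) (M : indep_rule d m) : top d m :=
  fun x y => top_id x y - rule_E1 M x y.

(* type I error Tr[rho^{(x)m} E_1] and type II error Tr[sigma^{(x)m} E_0]
   (both real numbers; we take the real part to land in R) *)
Definition type1_err (d m : nat) (rho : 'M[C]_d) (M : indep_rule d m) : R :=
  complex.Re (tr_mul (tpow rho m) (rule_E1 M)).
Definition type2_err (d m : nat) (sigma : 'M[C]_d) (M : indep_rule d m) : R :=
  complex.Re (tr_mul (tpow sigma m) (rule_E0 M)).

End Quantum.

(* Main.v *)
Require Import Defs.
From HB Require Import structures.
From mathcomp Require Import all_boot all_order all_algebra.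
From mathcomp Require Import complex.
From mathcomp Require Import all_classical all_reals.
From mathcomp Require Import sequences exp.
From mathcomp Require Import ring lra.
Import Order.TTheory GRing.Theory Num.Theory.
Set Implicit Arguments. Unset Strict Implicit. Unset Printing Implicit Defensive.
Local Open Scope ring_scope.
Section Classical.
Variable R : realType.

Lemma expR_le_quad (x : R) : x <= 1/2 -> expR x <= 1 + x + 2 * x ^+ 2.
Proof.
move=> hx.
have h1 : 1 - x <= expR (- x) by rewrite -[1 - x]/(1 + - x); exact: expR_ge1Dx.
have h1p : 0 < 1 - x by lra.
have : expR x * (1 - x) <= 1.
  rewrite -[X in _ <= X](expRxMexpNx_1 x); apply: ler_wpM2l; [exact: expR_ge0 | exact: h1].
move=> h2.
have h3 : 1 <= (1 - x) * (1 + x + 2 * x ^+ 2).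
  have -> : (1 - x) * (1 + x + 2 * x ^+ 2) = 1 + x ^+ 2 * (1 - 2 * x) by ring.
  rewrite lerDl; apply: mulr_ge0; [exact: sqr_ge0| lra].
have : expR x * (1 - x) <= (1 + x + 2 * x ^+ 2) * (1 - x) by lra.
by rewrite ler_pM2r.
Qed.

Definition Eq (k m : nat) (q : 'I_k -> R) (h : {ffun 'I_m -> 'I_k} -> R) : R :=
  \sum_(o : {ffun 'I_m -> 'I_k}) (\prod_i q (o i)) * h o.

Lemma Eq_prod k m (q : 'I_k -> R) (f : 'I_m -> 'I_k -> R) :
  Eq q (fun o => \prod_i f i (o i)) = \prod_i \sum_c q c * f i c.
Proof.
rewrite /Eq bigA_distr_bigA /=; apply: eq_bigr => o _.
by rewrite big_split.
Qed.


Lemma sum_delta (I : finType) (j : I) (f : I -> R) :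
  \sum_i (i == j)%:R * f i = f j.
Proof.
rewrite (bigD1 j) //= eqxx mul1r big1 ?addr0 // => i /negbTE ->; by rewrite mul0r.
Qed.

Lemma eq_Eq k m (q : 'I_k -> R) (h h' : {ffun 'I_m -> 'I_k} -> R) :
  (forall o, h o = h' o) -> Eq q h = Eq q h'.
Proof. by move=> e; apply: eq_bigr => o _; rewrite e. Qed.

Lemma Eq_add k m (q : 'I_k -> R) (h h' : {ffun 'I_m -> 'I_k} -> R) :
  Eq q (fun o => h o + h' o) = Eq q h + Eq q h'.
Proof. by rewrite /Eq -big_split; apply: eq_bigr => o _; rewrite mulrDr. Qed.

Lemma Eq_scale k m (q : 'I_k -> R) (h : {ffun 'I_m -> 'I_k} -> R) c :
  Eq q (fun o => c * h o) = c * Eq q h.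
Proof. by rewrite /Eq mulr_sumr; apply: eq_bigr => o _; rewrite mulrCA. Qed.

Lemma Eq_sum k m (q : 'I_k -> R) (I : finType) (h : I -> {ffun 'I_m -> 'I_k} -> R) :
  Eq q (fun o => \sum_l h l o) = \sum_l Eq q (h l).
Proof.
rewrite /Eq exchange_big /=; apply: eq_bigr => o _; by rewrite mulr_sumr.
Qed.

Lemma Eq_le k m (q : 'I_k -> R) (h h' : {ffun 'I_m -> 'I_k} -> R) :
  (forall c, 0 <= q c) -> (forall o, h o <= h' o) -> Eq q h <= Eq q h'.
Proof.
move=> q0 hh; apply: ler_sum => o _; apply: ler_wpM2l => //.
by apply: prodr_ge0 => i _.
Qed.

Lemma Eq_ge0 k m (q : 'I_k -> R) (h : {ffun 'I_m -> 'I_k} -> R) :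
  (forall c, 0 <= q c) -> (forall o, 0 <= h o) -> 0 <= Eq q h.
Proof.
move=> q0 hh; apply: sumr_ge0 => o _; apply: mulr_ge0 => //.
by apply: prodr_ge0 => i _.
Qed.

Lemma Eq_const k m (q : 'I_k -> R) c :
  \sum_b q b = 1 -> Eq q (fun _ : {ffun 'I_m -> 'I_k} => c) = c.
Proof.
move=> q1; rewrite /Eq -mulr_suml.
rewrite (_ : \sum_(o : {ffun 'I_m -> 'I_k}) \prod_i q (o i) = \prod_(i < m) \sum_b q b);
  last by rewrite bigA_distr_bigA.
rewrite (eq_bigr (fun _ => 1)); last by move=> i _; exact: q1.
by rewrite big1_eq mul1r.
Qed.

Lemma Eq_pair k m (q : 'I_k -> R) (i j : 'I_m) (h h' : 'I_k -> R) :
  \sum_b q b = 1 ->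
  Eq q (fun o => h (o i) * h' (o j)) =
  if i == j then \sum_c q c * (h c * h' c)
  else (\sum_c q c * h c) * (\sum_c q c * h' c).
Proof.
move=> q1.
have one : forall (f : 'I_k -> R), (forall c, f c = 1) -> \sum_c q c * f c = 1.
  move=> f f1; rewrite -[RHS]q1; apply: eq_bigr => c _; by rewrite f1 mulr1.
case: (eqVneq i j) => [<-|nij].
  pose f (l : 'I_m) (c : 'I_k) := if l == i then h c * h' c else 1.
  rewrite (@eq_Eq _ _ _ _ (fun o => \prod_l f l (o l))); last first.
    by move=> o; rewrite -big_mkcond /= big_pred1_eq.
  rewrite Eq_prod (bigD1 i) //= [X in _ * X = _]big1 ?mulr1; last first.
    by move=> l li; apply: (one (f l)) => c; rewrite /f (negbTE li).
  by apply: eq_bigr => c _; rewrite /f eqxx.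
pose f (l : 'I_m) (c : 'I_k) := (if l == i then h c else 1) * (if l == j then h' c else 1).
rewrite (@eq_Eq _ _ _ _ (fun o => \prod_l f l (o l))); last first.
  move=> o; rewrite big_split /= -!big_mkcond /= !big_pred1_eq //.
rewrite Eq_prod (bigD1 i) //= (bigD1 j) 1?eq_sym //= [X in _ * (_ * X) = _]big1 ?mulr1; last first.
  move=> l /andP [li lj]; apply: (one (f l)) => c; by rewrite /f (negbTE li) (negbTE lj) mulr1.
congr (_ * _); apply: eq_bigr => c _; rewrite /f ?eqxx.
  by rewrite (negbTE nij) mulr1.
by rewrite eq_sym (negbTE nij) mul1r.
Qed.


Definition freq k m (o : {ffun 'I_m -> 'I_k}) (c : 'I_k) : R :=
  (\sum_i ((o i == c)%:R)) / m%:R.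
Definition Tst k m (p : 'I_k -> R) (o : {ffun 'I_m -> 'I_k}) : R :=
  \sum_c (freq o c - p c) ^+ 2.
Definition gtest k m (p : 'I_k -> R) (a : R) (o : {ffun 'I_m -> 'I_k}) : R :=
  if (m%:R * a)^-1 < Tst p o then 1 else 0.

Lemma gtest01 k m (p : 'I_k -> R) a (o : {ffun 'I_m -> 'I_k}) : 0 <= gtest p a o <= 1.
Proof. rewrite /gtest; case: ifP => _; lra. Qed.

Lemma Tst_ge0 k m (p : 'I_k -> R) (o : {ffun 'I_m -> 'I_k}) : 0 <= Tst p o.
Proof. by apply: sumr_ge0 => c _; apply: sqr_ge0. Qed.

Lemma var_bound k m (p : 'I_k -> R) (c : 'I_k) :
  (0 < m)%N -> \sum_b p b = 1 ->
  Eq p (fun o : {ffun 'I_m -> 'I_k} => (freq o c - p c) ^+ 2) = (p c - p c ^+ 2) / m%:R.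
Proof.
move=> m0 p1.
have mn0 : (m%:R : R) != 0 by rewrite pnatr_eq0 -lt0n.
pose Z (b : 'I_k) : R := (b == c)%:R - p c.
have EZ : \sum_b p b * Z b = 0.
  rewrite /Z; under eq_bigr do rewrite mulrBr.
  rewrite sumrB -mulr_suml p1 mul1r.
  under eq_bigr do rewrite mulrC.
  by rewrite sum_delta subrr.
have VZ : \sum_b p b * (Z b * Z b) = p c - p c ^+ 2.
  have e : forall b, p b * (Z b * Z b) = (b == c)%:R * (p b * (1 - 2 * p c)) + p b * p c ^+ 2.
    by move=> b; rewrite /Z; case: (b == c); rewrite /= ?mulr1n ?mulr0n; ring.
  rewrite (eq_bigr _ (fun b _ => e b)).
  by rewrite big_split /= sum_delta -mulr_suml p1; ring.
rewrite (@eq_Eq _ _ _ _ (fun o => m%:R^-2 * \sum_i \sum_j Z (o i) * Z (o j))); last first.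
  move=> o; rewrite /freq.
  have -> : (\sum_i (o i == c)%:R) / m%:R - p c = (\sum_i Z (o i)) / m%:R.
    by rewrite /Z sumrB sumr_const card_ord mulrBl -(mulr_natr (p c) m) mulfK.
  by rewrite expr_div_n expr2 mulr_suml mulrC; congr (_ * _); apply: eq_bigr => i _; rewrite mulr_sumr.
rewrite Eq_scale Eq_sum.
rewrite (eq_bigr (fun _ => \sum_b p b * (Z b * Z b))); last first.
  move=> i _; rewrite Eq_sum (bigD1 i) //= big1 ?addr0.
    by rewrite Eq_pair // eqxx.
  by move=> j ji; rewrite Eq_pair // eq_sym (negbTE ji) EZ mul0r.
rewrite sumr_const card_ord VZ -mulr_natr; field; exact: mn0.
Qed.


Lemma typeI k m (p : 'I_k -> R) a :
  (0 < m)%N -> 0 < a -> (forall c, 0 <= p c) -> \sum_b p b = 1 ->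
  Eq p (gtest (m:=m) p a) <= a.
Proof.
move=> m0 a0 p0 p1.
have mp : (0 : R) < m%:R by rewrite ltr0n.
have map : (0 : R) < m%:R * a by apply: mulr_gt0.
have H : forall o, gtest (m:=m) p a o <= (m%:R * a) * Tst p o.
  move=> o; rewrite /gtest; case: ifP => h.
    by rewrite -[X in X <= _](mulfV (lt0r_neq0 map)); apply: ler_wpM2l; [apply: ltW | apply: ltW].
  by apply: mulr_ge0; [apply: ltW | apply: Tst_ge0].
apply: le_trans (Eq_le p0 H) _.
rewrite Eq_scale /Tst Eq_sum.
rewrite (eq_bigr _ (fun c _ => var_bound c m0 p1)).
have : \sum_c (p c - p c ^+ 2) / m%:R <= m%:R^-1.
  rewrite -mulr_suml ler_pdivrMr // mulVf ?lt0r_neq0 //.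
  rewrite -p1; apply: ler_sum => c _; rewrite lerBlDr lerDl; exact: sqr_ge0.
move=> h; apply: le_trans (ler_wpM2l (ltW map) h) _.
by rewrite mulrC mulrA mulVf ?lt0r_neq0 // mul1r.
Qed.


Lemma le_sum1 k (q : 'I_k -> R) c : (forall b, 0 <= q b) -> q c <= \sum_b q b.
Proof. move=> q0; rewrite (bigD1 c) //= lerDl; exact: sumr_ge0. Qed.

Lemma typeII k m (p q : 'I_k -> R) a :
  (0 < m)%N -> 0 < a -> (forall c, 0 <= p c) -> \sum_b p b = 1 ->
  (forall c, 0 <= q c) -> \sum_b q b = 1 ->
  let D2 := \sum_c (q c - p c) ^+ 2 in
  let tau := Num.sqrt ((m%:R * a)^-1) in
  0 < D2 -> tau <= Num.sqrt D2 ->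
  Eq q (fun o => 1 - gtest (m:=m) p a o) <=
    expR (- (3 / 32) * m%:R * (Num.sqrt D2 - tau) ^+ 2).
Proof.
move=> m0 a0 p0 p1 q0 q1 D2 tau D2p tauD.
have mp : (0 : R) < m%:R by rewrite ltr0n.
have map : (0 : R) < m%:R * a by apply: mulr_gt0.
set D := Num.sqrt D2.
have Dp : 0 < D by rewrite sqrtr_gt0.
have DD : D ^+ 2 = D2 by rewrite sqr_sqrtr // ltW.
have taup : 0 < tau by rewrite sqrtr_gt0 invr_gt0.
have tt : tau ^+ 2 = (m%:R * a)^-1 by rewrite sqr_sqrtr // invr_ge0 ltW.
have q1' : forall c, q c <= 1 by move=> c; rewrite -q1; exact: le_sum1.
have p1' : forall c, p c <= 1 by move=> c; rewrite -p1; exact: le_sum1.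
pose u c := (q c - p c) / D.
pose mu := \sum_c q c * u c.
have su2 : \sum_c u c ^+ 2 = 1.
  rewrite /u; under eq_bigr do rewrite expr_div_n.
  by rewrite -mulr_suml DD -/D2 mulfV // lt0r_neq0.
have u2 : forall c, u c ^+ 2 <= 1.
  move=> c; rewrite -[X in _ <= X]su2.
  exact: (@le_sum1 k (fun c => u c ^+ 2) c (fun b => sqr_ge0 (u b))).
have ub : forall c, -1 <= u c /\ u c <= 1 by move=> c; have := u2 c; split; nra.
have mu1 : mu <= 1.
  rewrite /mu -q1; apply: ler_sum => c _.
  have := ub c; have := q0 c; nra.
have muD : mu - \sum_c p c * u c = D.
  rewrite /mu -sumrB.
  rewrite (eq_bigr (fun c => (q c - p c) ^+ 2 / D)); last first.
    by move=> c _; rewrite /u; rewrite -mulrBl mulrA -expr2.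
  by rewrite -mulr_suml -/D2 -DD expr2 mulfK // lt0r_neq0.
have D22 : D2 <= 2.
  have -> : (2 : R) = \sum_c (q c + p c) by rewrite big_split /= q1 p1.
  apply: ler_sum => c _; have := q0 c; have := p0 c; have := q1' c; have := p1' c; nra.
have D2le : D <= 2 by have := DD; nra.
set s := D - tau.
have s0 : 0 <= s by rewrite /s subr_ge0.
have s2 : s <= 2 by rewrite /s; lra.
pose lam := s / 8.
pose Y b := mu - u b.
have Yb : forall b, lam * Y b <= 1/2.
  move=> b; have := ub b; rewrite /lam /Y => h; nra.
have EY : \sum_b q b * Y b = 0.
  rewrite /Y; under eq_bigr do rewrite mulrBr.
  by rewrite sumrB -mulr_suml q1 mul1r subrr.
have EY2 : \sum_b q b * Y b ^+ 2 <= 1.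
  have e : forall b, q b * Y b ^+ 2 = q b * u b ^+ 2 + (mu ^+ 2 * q b - 2 * mu * (q b * u b)).
    by move=> b; rewrite /Y; ring.
  rewrite (eq_bigr _ (fun b _ => e b)) big_split /= sumrB -!mulr_sumr q1 -/mu mulr1.
  have : \sum_b q b * u b ^+ 2 <= 1.
    rewrite -su2; apply: ler_sum => b _; have := q1' b; have := q0 b; have := sqr_ge0 (u b); nra.
  have := sqr_ge0 mu; lra.
have mgf : \sum_b q b * expR (lam * Y b) <= expR (2 * lam ^+ 2).
  apply: le_trans (_ : 1 + 2 * lam ^+ 2 <= _); last first.
    exact: expR_ge1Dx.
  apply: le_trans (_ : \sum_b q b * (1 + lam * Y b + 2 * (lam * Y b) ^+ 2) <= _).
    by apply: ler_sum => b _; apply: ler_wpM2l => //; apply: expR_le_quad.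
  have e : forall b, q b * (1 + lam * Y b + 2 * (lam * Y b) ^+ 2) =
      q b + lam * (q b * Y b) + 2 * lam ^+ 2 * (q b * Y b ^+ 2) by move=> b; ring.
  rewrite (eq_bigr _ (fun b _ => e b)) !big_split /= -!mulr_sumr q1 EY mulr0 addr0.
  rewrite lerD2l; apply: le_trans (ler_wpM2l _ EY2) _; first by apply: mulr_ge0 => //; exact: sqr_ge0.
  by rewrite mulr1.
have pw : forall o : {ffun 'I_m -> 'I_k},
    1 - gtest p a o <= expR (- (lam * m%:R * s)) * \prod_i expR (lam * Y (o i)).
  move=> o; rewrite -expR_sum -expRD /gtest; case: ifP => h.
    by rewrite subrr expR_ge0.
  rewrite subr0; apply: le_trans (expR_ge1Dx _); rewrite lerDl.
  move/negbT: h; rewrite -leNgt -tt => hT.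
  have fr : \sum_i u (o i) = m%:R * \sum_c u c * freq o c.
    rewrite /freq mulr_sumr.
    rewrite (eq_bigr (fun c => \sum_i (o i == c)%:R * u c)); last first.
      move=> c _; rewrite -mulr_suml; field; exact: lt0r_neq0.
    rewrite exchange_big /=; apply: eq_bigr => i _.
    rewrite (eq_bigr (fun c => (c == o i)%:R * u c)); last by move=> c _; rewrite eq_sym.
    by rewrite sum_delta.
  have lin : \sum_c u c * (freq o c - p c) <= tau.
    apply: le_trans (_ : \sum_c (tau * u c ^+ 2 + (freq o c - p c) ^+ 2 / tau) / 2 <= _).
      apply: ler_sum => c _; set w := freq o c - p c.
      have : 0 <= (tau * u c - w) ^+ 2 / tau by apply: divr_ge0; [exact: sqr_ge0 | exact: ltW].
      have -> : (tau * u c - w) ^+ 2 / tau = tau * u c ^+ 2 + w ^+ 2 / tau - 2 * (u c * w).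
        by field; apply: lt0r_neq0.
      lra.
    rewrite -mulr_suml big_split /= -mulr_sumr su2 -mulr_suml mulr1.
    have : (\sum_i (freq o i - p i) ^+ 2) / tau <= tau.
      by rewrite ler_pdivrMr // -expr2.
    lra.
  rewrite -mulr_sumr.
  have lam0 : 0 <= lam by rewrite /lam; apply: divr_ge0.
  suff hY : m%:R * s <= \sum_i Y (o i).
    rewrite -mulrA -mulrN -mulrDr; apply: mulr_ge0 => //; lra.
  rewrite /Y sumrB sumr_const card_ord fr.
  have e2 : \sum_c u c * (freq o c - p c) = \sum_c u c * freq o c - \sum_c p c * u c.
    by rewrite -sumrB; apply: eq_bigr => c _; ring.
  rewrite e2 in lin.
  have -> : mu *+ m - m%:R * \sum_c u c * freq o c = m%:R * (mu - \sum_c u c * freq o c).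
    by rewrite -mulr_natr; ring.
  apply: ler_wpM2l; first exact: ltW.
  rewrite /s; lra.
apply: le_trans (Eq_le q0 pw) _.
rewrite Eq_scale (Eq_prod q (fun i b => expR (lam * Y b))).
apply: le_trans (_ : expR (- (lam * m%:R * s)) * \prod_(i < m) expR (2 * lam ^+ 2) <= _).
  apply: ler_wpM2l; first exact: expR_ge0.
  apply: ler_prod => i _; rewrite mgf andbT; apply: sumr_ge0 => b _.
  by apply: mulr_ge0 => //; exact: expR_ge0.
rewrite -expR_sum -expRD sumr_const card_ord ler_expR /lam -(mulr_natr (2 * (s / 8) ^+ 2) m).
rewrite le_eqVlt; apply/orP; left; apply/eqP; by field.
Qed.

End Classical.
Section Q.
Variable R : realType.
Local Notation C := R[i].

Lemma sumD_l (I : finType) (j : I) (f : I -> C) : \sum_i (i == j)%:R * f i = f j.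
Proof.
rewrite (bigD1 j) //= eqxx mul1r big1 ?addr0 // => i /negbTE ->; by rewrite mul0r.
Qed.
Lemma sumD_r (I : finType) (j : I) (f : I -> C) : \sum_i f i * (i == j)%:R = f j.
Proof. rewrite -[RHS](sumD_l j f); apply: eq_bigr => i _; exact: mulrC. Qed.

Lemma tr_mul_tens d m (s : 'M[C]_d) (A : 'I_m -> 'M[C]_d) :
  tr_mul (@tpow R d s m) (tens A) = \prod_i \tr (s *m A i).
Proof.
rewrite /tr_mul /tpow /tens.
transitivity (\sum_(x : {ffun 'I_m -> 'I_d}) \prod_i \sum_b s (x i) b * A i b (x i)).
  apply: eq_bigr => x _; rewrite bigA_distr_bigA; apply: eq_bigr => z _.
  by rewrite big_split.
rewrite (eq_bigr (fun i => \sum_a \sum_b s a b * A i b a)); last first.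
  by move=> i _; rewrite /mxtrace; apply: eq_bigr => a _; rewrite mxE.
by rewrite bigA_distr_bigA.
Qed.

Lemma tr_mul_id d m (s : 'M[C]_d) : tr_mul (@tpow R d s m) (@top_id R d m) = (\tr s) ^+ m.
Proof.
rewrite /tr_mul /top_id.
transitivity (\sum_(x : {ffun 'I_m -> 'I_d}) \prod_i s (x i) (x i)).
  apply: eq_bigr => x _; rewrite (eq_bigr (fun z => @tpow R d s m x z * (z == x)%:R)) //.
  by rewrite sumD_r.
have -> : \tr s ^+ m = \prod_(i < m) \tr s by rewrite prodr_const card_ord.
by rewrite /mxtrace bigA_distr_bigA.
Qed.

Lemma tr_mul_E1 d m (s : 'M[C]_d) (M : indep_rule R d m) :
  tr_mul (@tpow R d s m) (rule_E1 M) =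
  \sum_o Complex (@ir_g _ _ _ M o) 0 * tr_mul (@tpow R d s m) (tens (fun i => @ir_F _ _ _ M i (o i))).
Proof.
rewrite /tr_mul /rule_E1.
under eq_bigr do under eq_bigr do rewrite mulr_sumr.
under eq_bigr do rewrite exchange_big /=.
rewrite exchange_big /=; apply: eq_bigr => o _.
rewrite mulr_sumr; apply: eq_bigr => x _; rewrite mulr_sumr; apply: eq_bigr => z _.
by rewrite mulrCA.
Qed.

Lemma tr_mul_E0 d m (s : 'M[C]_d) (M : indep_rule R d m) :
  tr_mul (@tpow R d s m) (rule_E0 M) = tr_mul (@tpow R d s m) (@top_id R d m) - tr_mul (@tpow R d s m) (rule_E1 M).
Proof.
rewrite /tr_mul /rule_E0 -sumrB; apply: eq_bigr => x _; rewrite -sumrB.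
by apply: eq_bigr => z _; rewrite mulrBr.
Qed.


Lemma hadjE n m (A : 'M[C]_(n, m)) i j : hadj A i j = (A j i)^*.
Proof. by rewrite /hadj !mxE. Qed.

Lemma hadj_mul n m p (A : 'M[C]_(n, m)) (B : 'M[C]_(m, p)) :
  hadj (A *m B) = hadj B *m hadj A.
Proof.
apply/matrixP => i j; rewrite hadjE !mxE rmorph_sum; apply: eq_bigr => l _.
by rewrite !hadjE rmorphM mulrC.
Qed.

Lemma hadjK n m (A : 'M[C]_(n, m)) : hadj (hadj A) = A.
Proof. by apply/matrixP => i j; rewrite !hadjE conjCK. Qed.

Lemma hadjZ n m (c : C) (A : 'M[C]_(n, m)) : hadj (c *: A) = c^* *: hadj A.
Proof. by apply/matrixP => i j; rewrite !mxE rmorphM. Qed.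

Lemma ge0_real (z : C) : 0 <= z -> z = Complex (complex.Re z) 0 /\ 0 <= complex.Re z.
Proof. rewrite lecE /= => /andP [/eqP h1 h2]. case: z h1 h2 => x y /= -> h; split => //. Qed.

Lemma cR_mul (x y : R) : Complex x 0 * Complex y 0 = Complex (x * y) 0 :> C.
Proof. change (Complex (x * y - 0 * 0) (x * 0 + 0 * y) = Complex (x * y) 0 :> C); congr Complex; ring. Qed.
Lemma cR_add (x y : R) : Complex x 0 + Complex y 0 = Complex (x + y) 0 :> C.
Proof. change (Complex (x + y) (0 + 0) = Complex (x + y) 0 :> C); congr Complex; ring. Qed.
Lemma cR_prod (I : finType) (f : I -> R) :
  \prod_i Complex (f i) 0 = Complex (\prod_i f i) 0 :> C.
Proof.
by apply: (big_ind2 (fun (a : C) b => a = Complex b 0)) => // a a' b b' -> ->; rewrite cR_mul.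
Qed.
Lemma cR_sum (I : finType) (f : I -> R) :
  \sum_i Complex (f i) 0 = Complex (\sum_i f i) 0 :> C.
Proof.
apply: (big_ind2 (fun (a : C) b => a = Complex b 0)) => //.
by move=> a a' b b' -> ->; rewrite cR_add.
Qed.
Lemma ReD (a b : C) : complex.Re (a + b) = complex.Re a + complex.Re b.
Proof. by case: a => ? ?; case: b => ? ?. Qed.
Lemma Re_sum (I : finType) (f : I -> C) : complex.Re (\sum_i f i) = \sum_i complex.Re (f i).
Proof.
apply: (big_ind2 (fun (a : C) b => complex.Re a = b)) => //.
by move=> a b a' b' <- <-; rewrite ReD.
Qed.
Lemma ReN (a : C) : complex.Re (- a) = - complex.Re a.
Proof. by case: a => ? ?. Qed.
Lemma ReJ (a : C) : complex.Re (a^*) = complex.Re a.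
Proof. by case: a => ? ?. Qed.


Definition OT d := ('I_d * 'I_d * 'I_4)%type.
Definition om (w : 'I_4) : C := nth 0 [:: 1; Complex 0 1; -1; Complex 0 (-1)] w.
Definition vec d (t : OT d) : 'cV[C]_d :=
  \col_a ((a == t.1.1)%:R + om t.2 * (a == t.1.2)%:R).

Lemma ceq (x y : C) : complex.Re x = complex.Re y -> complex.Im x = complex.Im y -> x = y.
Proof. by case: x => ? ?; case: y => ? ? /= -> ->. Qed.

Lemma om_norm w : (om w)^* * om w = 1.
Proof.
case: w => [[|[|[|[|w]]]] hw] //=; apply: ceq => /=; rewrite /om /=; ring.
Qed.


Lemma om_sum : \sum_w om w = 0.
Proof. rewrite !big_ord_recr big_ord0 /=; apply: ceq => /=; rewrite /om /=; ring. Qed.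

Lemma omc_sum : \sum_w (om w)^* = 0.
Proof. by rewrite -rmorph_sum om_sum rmorph0. Qed.

Lemma sum_OT d (G : OT d -> C) :
  \sum_t G t = \sum_j \sum_k \sum_w G ((j, k), w).
Proof.
rewrite pair_bigA /= pair_bigA /=; apply: eq_bigr => [[[j k] w]] _ //.
Qed.

Lemma sum_OT_R d (G : OT d -> R) :
  \sum_t G t = \sum_j \sum_k \sum_w G ((j, k), w).
Proof.
rewrite pair_bigA /= pair_bigA /=; apply: eq_bigr => [[[j k] w]] _ //.
Qed.

Lemma sum_w4 (x y x' y' : C) :
  \sum_w (x + om w * y) * (x' + (om w)^* * y') = 4%:R * (x * x' + y * y').
Proof.
have e : forall w, (x + om w * y) * (x' + (om w)^* * y') =
   x * x' + (om w)^* * (x * y') + om w * (y * x') + y * y'.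
  move=> w; transitivity (x * x' + (om w)^* * (x * y') + om w * (y * x') + ((om w)^* * om w) * (y * y')); first ring.
  by rewrite om_norm mul1r.
rewrite (eq_bigr _ (fun w _ => e w)) !big_split /= -!mulr_suml omc_sum om_sum.
rewrite !sumr_const card_ord !mul0r !addr0; ring.
Qed.

Lemma vec_outer d (t : OT d) a b :
  (vec t *m hadj (vec t)) a b =
  ((a == t.1.1)%:R + om t.2 * (a == t.1.2)%:R) *
  ((b == t.1.1)%:R + (om t.2)^* * (b == t.1.2)%:R).
Proof.
rewrite !mxE big_ord1 hadjE !mxE; congr (_ * _).
by rewrite rmorphD rmorphM !rmorph_nat.
Qed.

Lemma vec_sum d : \sum_t vec t *m hadj (vec t) = (8 * d)%:R%:M :> 'M[C]_d.
Proof.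
apply/matrixP => a b; rewrite summxE !mxE.
rewrite (eq_bigr _ (fun t _ => vec_outer t a b)) sum_OT /=.
under eq_bigr do under eq_bigr do rewrite sum_w4.
pose A (j : 'I_d) : C := (a == j)%:R * (b == j)%:R.
have s1 : \sum_j A j = (a == b)%:R.
  rewrite (eq_bigr (fun j => (j == a)%:R * (b == j)%:R)); last by move=> j _; rewrite /A eq_sym.
  by rewrite sumD_l eq_sym.
transitivity (\sum_(j < d) \sum_(k < d) (4%:R * A j + 4%:R * A k)).
  by apply: eq_bigr => j _; apply: eq_bigr => k _; rewrite mulrDr.
rewrite (eq_bigr (fun j => 4%:R * A j *+ d + 4%:R * (a == b)%:R)); last first.
  by move=> j _; rewrite big_split /= sumr_const card_ord -mulr_sumr s1.
rewrite big_split /= sumr_const card_ord sumrMnl -mulr_sumr s1.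
case: (a == b); rewrite /= ?mulr0 ?mul0rn ?mulr1n ?mulr1 ?addr0 //.
rewrite -mulrnDl -mulr_natr natrM; ring.
Qed.


Lemma natC n : (n%:R : C) = Complex n%:R 0.
Proof.
elim: n => [|n IH]; first reflexivity.
by rewrite -addn1 !natrD IH cR_add.
Qed.

Definition cst d : C := Complex (8 * d%:R)^-1 0.
Definition Pm d (t : OT d) : 'M[C]_d := cst d *: (vec t *m hadj (vec t)).

Lemma Pm_sum d : (0 < d)%N -> \sum_t Pm t = 1%:M :> 'M[C]_d.
Proof.
move=> d0; rewrite /Pm -scaler_sumr vec_sum -scalemx1 scalerA /cst natC cR_mul.
rewrite natrM mulVf ?scale1r //.
by rewrite mulf_eq0 negb_or !pnatr_eq0 /= -lt0n.
Qed.

Lemma mx11_mul (A B : 'M[C]_1) : (A *m B) 0 0 = A 0 0 * B 0 0.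
Proof. by rewrite mxE big_ord1. Qed.

Lemma cst_ge0 d : 0 <= cst d.
Proof. by rewrite lecE /= eqxx /= invr_ge0 mulr_ge0 ?ler0n. Qed.

Lemma cst_conj d : (cst d)^* = cst d.
Proof. by apply: ceq => //=; rewrite oppr0. Qed.

Lemma Pm_psd d (t : OT d) : psd (Pm t).
Proof.
split.
  by rewrite /Pm hadjZ cst_conj hadj_mul hadjK.
move=> w; rewrite /Pm -scalemxAr -scalemxAl mxE.
apply: mulr_ge0; first exact: cst_ge0.
rewrite mulmxA -(mulmxA (hadj w *m vec t)) mx11_mul.
have -> : hadj (vec t) *m w = hadj (hadj w *m vec t) by rewrite hadj_mul hadjK.
rewrite hadjE; exact: mul_conjC_ge0.
Qed.

Lemma tr11 (A : 'M[C]_1) : \tr A = A 0 0.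
Proof. by rewrite /mxtrace big_ord1. Qed.

Lemma tr_Pm d (s : 'M[C]_d) (t : OT d) :
  \tr (s *m Pm t) = cst d * (hadj (vec t) *m s *m vec t) 0 0.
Proof.
rewrite /Pm -scalemxAr mxtraceZ mulmxA mxtrace_mulC mulmxA tr11 //.
Qed.

Definition qv d (s : 'M[C]_d) (t : OT d) : R :=
  (8 * d%:R)^-1 * complex.Re ((hadj (vec t) *m s *m vec t) 0 0).

Lemma tr_Pm_real d (s : 'M[C]_d) (t : OT d) :
  psd s -> \tr (s *m Pm t) = Complex (qv s t) 0 /\ 0 <= qv s t.
Proof.
move=> [_ hs]; have [e h] := ge0_real (hs (vec t)).
rewrite tr_Pm e /cst cR_mul /qv /=; split => //.
by apply: mulr_ge0 => //; rewrite invr_ge0 mulr_ge0 ?ler0n.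
Qed.


Lemma quad_vec d (X : 'M[C]_d) (t : OT d) :
  (hadj (vec t) *m X *m vec t) 0 0 =
  X t.1.1 t.1.1 + om t.2 * X t.1.1 t.1.2 + (om t.2)^* * X t.1.2 t.1.1
  + (om t.2)^* * om t.2 * X t.1.2 t.1.2.
Proof.
set j := t.1.1; set k := t.1.2; set w := om t.2.
have inner : forall b, (hadj (vec t) *m X) 0 b = X j b + w^* * X k b.
  move=> b; rewrite mxE.
  have e : forall a, hadj (vec t) 0 a * X a b = (a == j)%:R * X a b + (a == k)%:R * (w^* * X a b).
    move=> a; rewrite hadjE !mxE rmorphD rmorphM !rmorph_nat -/j -/k -/w; ring.
  by rewrite (eq_bigr _ (fun a _ => e a)) big_split /= !sumD_l.
rewrite mxE (eq_bigr _ (fun b _ => congr1 (fun z => z * vec t b 0) (inner b))).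
have e : forall b, (X j b + w^* * X k b) * vec t b 0 =
   X j b * (b == j)%:R + (w * X j b) * (b == k)%:R + (w^* * X k b) * (b == j)%:R
   + (w^* * w * X k b) * (b == k)%:R.
  move=> b; rewrite !mxE -/j -/k -/w; ring.
by rewrite (eq_bigr _ (fun b _ => e b)) !big_split /= !sumD_r.
Qed.

Lemma Re_quad d (X : 'M[C]_d) (t : OT d) : hadj X = X ->
  complex.Re ((hadj (vec t) *m X *m vec t) 0 0) =
  complex.Re (X t.1.1 t.1.1) + complex.Re (X t.1.2 t.1.2)
  + 2 * complex.Re (om t.2 * X t.1.1 t.1.2).
Proof.
move=> hX; rewrite quad_vec om_norm mul1r.
have -> : X t.1.2 t.1.1 = (X t.1.1 t.1.2)^* by rewrite -{1}hX hadjE.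
rewrite -rmorphM !ReD ReJ; ring.
Qed.

Lemma dist_w (A : R) (z : C) :
  8 * (complex.Re z ^+ 2 + complex.Im z ^+ 2) <=
  \sum_w (A + 2 * complex.Re (om w * z)) ^+ 2.
Proof.
rewrite !big_ord_recr big_ord0 /=; case: z => x y /=; rewrite /om /=.
have := sqr_ge0 A; nra.
Qed.

Definition Fn d (X : 'M[C]_d) : R :=
  \sum_a \sum_b (complex.Re (X a b) ^+ 2 + complex.Im (X a b) ^+ 2).

Lemma dist d (X : 'M[C]_d) : hadj X = X ->
  8 * Fn X <= \sum_t complex.Re ((hadj (vec t) *m X *m vec t) 0 0) ^+ 2.
Proof.
move=> hX; rewrite sum_OT_R /Fn mulr_sumr; apply: ler_sum => j _.
rewrite mulr_sumr; apply: ler_sum => k _.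
rewrite (eq_bigr (fun w => (complex.Re (X j j) + complex.Re (X k k) + 2 * complex.Re (om w * X j k)) ^+ 2)).
  exact: dist_w.
by move=> w _; rewrite Re_quad.
Qed.


Lemma cauchy_sum d (b : 'I_d -> R) : (\sum_a b a) ^+ 2 <= d%:R * \sum_a b a ^+ 2.
Proof.
have h : 0 <= \sum_a \sum_c (b a - b c) ^+ 2.
  by apply: sumr_ge0 => a _; apply: sumr_ge0 => c _; exact: sqr_ge0.
have e : forall a c, (b a - b c) ^+ 2 = b a ^+ 2 + b c ^+ 2 - 2 * (b a * b c).
  by move=> a c; ring.
have E : \sum_a \sum_c (b a - b c) ^+ 2 =
    2 * (d%:R * \sum_a b a ^+ 2) - 2 * (\sum_a b a) ^+ 2.
  rewrite (eq_bigr (fun a => \sum_c (b a ^+ 2 + b c ^+ 2 - 2 * (b a * b c)))); last first.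
    by move=> a _; apply: eq_bigr => c _; rewrite e.
  rewrite (eq_bigr (fun a => b a ^+ 2 *+ d + \sum_c b c ^+ 2 - 2 * (b a * \sum_c b c))); last first.
    move=> a _; rewrite sumrB big_split /= sumr_const card_ord -mulr_sumr -mulr_sumr //.
  rewrite sumrB big_split /= sumr_const card_ord sumrMnl -mulr_sumr -mulr_suml.
  ring.
rewrite E in h; lra.
Qed.

Lemma normsq (z : C) : complex.Re (z^* * z) = complex.Re z ^+ 2 + complex.Im z ^+ 2.
Proof. by case: z => x y /=; ring. Qed.

Lemma Fn_tr d (Y : 'M[C]_d) : complex.Re (\tr (hadj Y *m Y)) = Fn Y.
Proof.
rewrite /mxtrace Re_sum /Fn exchange_big /=; apply: eq_bigr => a _.
rewrite mxE Re_sum; apply: eq_bigr => c _; by rewrite hadjE normsq.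
Qed.

Lemma Fn_ge0 d (Y : 'M[C]_d) : 0 <= Fn Y.
Proof.
apply: sumr_ge0 => a _; apply: sumr_ge0 => c _.
by apply: addr_ge0; exact: sqr_ge0.
Qed.

Definition ecol d (a : 'I_d) : 'cV[C]_d := \col_c (c == a)%:R.

Lemma quad_ecol d (B : 'M[C]_d) a : (hadj (ecol a) *m B *m ecol a) 0 0 = B a a.
Proof.
rewrite mxE (eq_bigr (fun c => B a c * (c == a)%:R)).
  by rewrite sumD_r.
move=> c _; rewrite !mxE; congr (_ * _).
rewrite (eq_bigr (fun c' => (c' == a)%:R * B c' c)) ?sumD_l //.
by move=> c' _; rewrite hadjE !mxE rmorph_nat.
Qed.

Lemma tn_bound d (X : 'M[C]_d) : trace_norm X ^+ 2 <= d%:R * Fn X.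
Proof.
rewrite /trace_norm /psd_sqrt.
set P := (X in xget _ X).
have [ex|nex] := pselect (exists B, P B); last first.
  rewrite xgetPN; last by move=> B PB; apply: nex; exists B.
  rewrite linear0 /= expr0n /=; apply: mulr_ge0; [exact: ler0n | exact: Fn_ge0].
have := xgetPex 0 ex; set B := xget 0 P; move=> [[hB hq] hBB].
pose b a := complex.Re (B a a).
have tB : complex.Re (\tr B) = \sum_a b a by rewrite /mxtrace Re_sum.
rewrite tB; apply: le_trans (cauchy_sum b) _.
apply: ler_wpM2l; first exact: ler0n.
rewrite -Fn_tr -hBB -{1}hB Fn_tr /Fn; apply: ler_sum => a _.
rewrite (bigD1 a) //=.
have h1 : b a ^+ 2 <= complex.Re (B a a) ^+ 2 + complex.Im (B a a) ^+ 2.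
  by rewrite /b lerDl sqr_ge0.
have h2 : 0 <= \sum_(c | c != a) (complex.Re (B a c) ^+ 2 + complex.Im (B a c) ^+ 2).
  by apply: sumr_ge0 => c _; apply: addr_ge0; exact: sqr_ge0.
lra.
Qed.

Lemma Fn_eq0 d (X : 'M[C]_d) : Fn X = 0 -> X = 0.
Proof.
move=> h; apply/matrixP => a c; rewrite mxE.
have h0 : forall a, 0 <= \sum_c (complex.Re (X a c) ^+ 2 + complex.Im (X a c) ^+ 2).
  by move=> a'; apply: sumr_ge0 => c' _; apply: addr_ge0; exact: sqr_ge0.
move/eqP: h; rewrite psumr_eq0; last by move=> a' _; exact: h0.
move/allP/(_ a (mem_index_enum a)) => /=; rewrite psumr_eq0; last first.
  by move=> c' _; apply: addr_ge0; exact: sqr_ge0.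
move/allP/(_ c (mem_index_enum c)) => /=.
rewrite paddr_eq0 ?sqr_ge0 // !sqrf_eq0 => /andP [/eqP h1 /eqP h2].
by apply: ceq.
Qed.


Lemma sumq_dec d k (dec : 'I_k -> OT d) (s : 'M[C]_d) :
  psd s -> \tr s = 1 -> \sum_c Pm (dec c) = 1%:M -> \sum_c qv s (dec c) = 1.
Proof.
move=> hs ts hP.
have : \sum_c Complex (qv s (dec c)) 0 = 1 :> C.
  rewrite (eq_bigr (fun c => \tr (s *m Pm (dec c)))); last first.
    by move=> c _; rewrite (tr_Pm_real (dec c) hs).1.
  by rewrite -linear_sum /= -mulmx_sumr hP mulmx1 ts.
by rewrite cR_sum => -[].
Qed.

Lemma E1_val d m k (s : 'M[C]_d) (dec : 'I_k -> OT d) (g : {ffun 'I_m -> 'I_k} -> R) povmP g01 :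
  psd s ->
  complex.Re (tr_mul (@tpow R d s m)
     (rule_E1 (@IndepRule R d m k (fun _ c => Pm (dec c)) g povmP g01))) =
  Eq (fun c => qv s (dec c)) g.
Proof.
move=> hs; rewrite tr_mul_E1 /= Re_sum /Eq; apply: eq_bigr => o _.
rewrite tr_mul_tens.
rewrite (eq_bigr (fun i => Complex (qv s (dec (o i))) 0)); last first.
  by move=> i _; rewrite (tr_Pm_real (dec (o i)) hs).1.
by rewrite cR_prod cR_mul /= mulrC.
Qed.

Lemma E0_val d m k (s : 'M[C]_d) (dec : 'I_k -> OT d) (g : {ffun 'I_m -> 'I_k} -> R) povmP g01 :
  psd s -> \tr s = 1 -> \sum_c Pm (dec c) = 1%:M ->
  complex.Re (tr_mul (@tpow R d s m)
     (rule_E0 (@IndepRule R d m k (fun _ c => Pm (dec c)) g povmP g01))) =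
  Eq (fun c => qv s (dec c)) (fun o => 1 - g o).
Proof.
move=> hs ts hP; rewrite tr_mul_E0.
have -> : complex.Re (tr_mul (@tpow R d s m) (@top_id R d m) -
    tr_mul (@tpow R d s m) (rule_E1 (@IndepRule R d m k (fun _ c => Pm (dec c)) g povmP g01))) =
    complex.Re (tr_mul (@tpow R d s m) (@top_id R d m)) -
    complex.Re (tr_mul (@tpow R d s m) (rule_E1 (@IndepRule R d m k (fun _ c => Pm (dec c)) g povmP g01))).
  by rewrite ReD ReN.
rewrite E1_val // tr_mul_id ts expr1n.
have := Eq_add (fun c => qv s (dec c)) (fun _ : {ffun 'I_m -> 'I_k} => 1) (fun o => - g o).
rewrite Eq_const ?sumq_dec // => ->.
have := Eq_scale (fun c => qv s (dec c)) g (-1).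
by rewrite mulN1r; under eq_Eq do rewrite mulN1r; move=> ->.
Qed.

End Q.

Unset Implicit Arguments.
Lemma hadjB (R : realType) d (A B : 'M[R[i]]_d) : hadj (A - B) = hadj A - hadj B.
Proof. by apply/matrixP => i j; rewrite !mxE rmorphB. Qed.

Lemma quadB (R : realType) d (A B : 'M[R[i]]_d) (t : OT d) :
  (hadj (vec R t) *m (A - B) *m vec R t) 0 0 =
  (hadj (vec R t) *m A *m vec R t) 0 0 - (hadj (vec R t) *m B *m vec R t) 0 0.
Proof.
rewrite mulmxBr mulmxBl.
set X := hadj _ *m A *m _; set Y := hadj _ *m B *m _.
by rewrite !mxE.
Qed.

Theorem theorem4 (R : realType) (d : nat) (rho : 'M[R[i]]_d) (alpha : R) :
  density rho -> 0 < alpha < 1 ->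
  exists M : forall m : nat, indep_rule R d m,
    (exists m0 : nat, forall m : nat, (m0 <= m)%N -> type1_err rho (M m) <= alpha)
    /\
    (forall sigma : 'M[R[i]]_d, density sigma -> sigma <> rho ->
       exists K : R, exists m0 : nat, forall m : nat, (m0 <= m)%N ->
         type2_err sigma (M m) <=
           expR (- (m%:R * trace_norm (rho - sigma) ^+ 2) / (86 * d%:R ^+ 3)
                 + K * Num.sqrt (m%:R))).
Proof.
move=> [hrho trho] /andP [a0 a1].
have d0 : (0 < d)%N.
  case: d rho hrho trho => // rho _; rewrite /mxtrace big_ord0 => h.
  by move: (oner_neq0 R[i]); rewrite -h eqxx.
have hP : \sum_(c < #|{: OT d}|) Pm R (enum_val c) = 1%:M.
  rewrite -big_enum_val /= -[RHS](Pm_sum R d0); apply: eq_bigl => x //.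
have povmP : forall m (i : 'I_m), povm (fun c : 'I_#|{: OT d}| => Pm R (enum_val c)).
  by move=> m i; split => // c; exact: Pm_psd.
pose p (c : 'I_#|{: OT d}|) := qv rho (enum_val c).
pose M m := @IndepRule R d m #|{: OT d}| (fun _ c => Pm R (enum_val c)) (gtest (m:=m) p alpha)
   (povmP m) (fun o => gtest01 p alpha o).
have p0 : forall c, 0 <= p c by move=> c; exact: (tr_Pm_real (enum_val c) hrho).2.
have p1 : \sum_c p c = 1 by apply: sumq_dec.
exists M; split.
  exists 1%N => m m1; rewrite /type1_err /M E1_val //.
  by apply: typeI => //.
move=> sigma [hs ts] neq.
pose q (c : 'I_#|{: OT d}|) := qv sigma (enum_val c).
have q0 : forall c, 0 <= q c by move=> c; exact: (tr_Pm_real (enum_val c) hs).2.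
have q1 : \sum_c q c = 1 by apply: sumq_dec.
set Del := rho - sigma.
have hD : hadj Del = Del by rewrite hadjB hrho.1 hs.1.
have Fp : 0 < Fn Del.
  rewrite lt_def Fn_ge0 andbT; apply/eqP => /Fn_eq0 /eqP; rewrite subr_eq0 => /eqP h.
  by apply: neq; rewrite h.
set D2 := \sum_c (q c - p c) ^+ 2.
have dp : (0 : R) < d%:R by rewrite ltr0n.
have D2lb : Fn Del <= 8 * d%:R ^+ 2 * D2.
  have e : forall c, (q c - p c) ^+ 2 = ((8 * d%:R)^-1) ^+ 2 *
      complex.Re ((hadj (vec R (enum_val c)) *m Del *m vec R (enum_val c)) 0 0) ^+ 2.
    by move=> c; rewrite /q /p /qv quadB ReD ReN; ring.
  rewrite /D2 (eq_bigr _ (fun c _ => e c)) -mulr_sumr.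
  rewrite (_ : \sum_(c < #|{: OT d}|) _ = \sum_t complex.Re ((hadj (vec R t) *m Del *m vec R t) 0 0) ^+ 2); last first.
    by symmetry; rewrite (eq_bigl (fun t => t \in {: OT d})) // big_enum_val.
  have := dist hD.
  set S := \sum_t _.
  have -> : 8 * d%:R ^+ 2 * ((8 * d%:R)^-1 ^+ 2 * S) = S / 8.
    by field; rewrite lt0r_neq0.
  move=> h; rewrite ler_pdivlMr //; lra.
have D2p : 0 < D2.
  have : 0 < 8 * d%:R ^+ 2 * D2 by apply: lt_le_trans Fp D2lb.
  by rewrite pmulr_rgt0 // mulr_gt0 // exprn_gt0.
have tnb := tn_bound Del.
pose K := 3 / 16 * Num.sqrt D2 * Num.sqrt alpha^-1.
exists K.
have hb : (alpha * D2)^-1 < (Num.Def.archi_bound ((alpha * D2)^-1))%:R.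
  by apply: archi_boundP; rewrite invr_ge0 mulr_ge0 // ltW.
exists (Num.Def.archi_bound ((alpha * D2)^-1)).+1 => m hm.
have m0 : (0 < m)%N by apply: leq_trans hm.
have mp : (0 : R) < m%:R by rewrite ltr0n.
have mgt : (alpha * D2)^-1 < m%:R.
  apply: lt_le_trans hb _; rewrite ler_nat; exact: ltnW.
have tauD : Num.sqrt ((m%:R * alpha)^-1) <= Num.sqrt D2.
  apply: ler_wsqrtr.
  have aD : 0 < alpha * D2 by apply: mulr_gt0.
  move: mgt; rewrite -div1r ltr_pdivrMr // => h.
  rewrite -div1r ler_pdivrMr ?mulr_gt0 //.
  have -> : D2 * (m%:R * alpha) = m%:R * (alpha * D2) by ring.
  exact: ltW.
rewrite /type2_err /M E0_val //.
apply: le_trans (typeII m0 a0 p0 p1 q0 q1 D2p tauD) _.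
rewrite ler_expR -/D2.
set D := Num.sqrt D2; set tau := Num.sqrt ((m%:R * alpha)^-1); set T := trace_norm Del.
have hDD : D ^+ 2 = D2 by rewrite sqr_sqrtr // ltW.
have tau0 : 0 <= tau by apply: sqrtr_ge0.
have D0 : 0 <= D by apply: sqrtr_ge0.
have hmt : m%:R * tau = Num.sqrt m%:R * Num.sqrt alpha^-1.
  rewrite /tau invfM sqrtrM ?invr_ge0 ?ler0n // sqrtrV ?ler0n // mulrA; congr (_ * _).
  have sp : 0 < Num.sqrt (m%:R : R) by rewrite sqrtr_gt0.
  rewrite -{1}(sqr_sqrtr (ltW mp)) expr2 mulfK //; exact: lt0r_neq0.
have hT : T ^+ 2 <= 8 * d%:R ^+ 3 * D2.
  apply: le_trans tnb _; have := ler_wpM2l (ltW dp) D2lb.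
  by have -> : d%:R * (8 * d%:R ^+ 2 * D2) = 8 * d%:R ^+ 3 * D2 by ring.
have Lq : - (3 / 32) * m%:R * (D - tau) ^+ 2 <=
    - (3 / 32) * (m%:R * D2) + 3 / 16 * (D * (m%:R * tau)).
  have e : - (3 / 32) * m%:R * (D - tau) ^+ 2 =
      - (3 / 32) * (m%:R * D2) + 3 / 16 * (D * (m%:R * tau)) - 3 / 32 * (m%:R * tau ^+ 2).
    by rewrite -hDD; field.
  rewrite e; have : 0 <= m%:R * tau ^+ 2 by apply: mulr_ge0; [exact: ltW | exact: sqr_ge0].
  lra.
apply: le_trans Lq _.
have eK : K * Num.sqrt m%:R = 3 / 16 * (D * (m%:R * tau)) by rewrite hmt /K -/D; ring.
rewrite eK.
have d3 : (0 : R) < 86 * d%:R ^+ 3 by apply: mulr_gt0 => //; apply: exprn_gt0.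
have h1 : (m%:R * T ^+ 2) / (86 * d%:R ^+ 3) <= 4 / 43 * (m%:R * D2).
  rewrite ler_pdivrMr //.
  have := ler_wpM2l (ltW mp) hT.
  have -> : 4 / 43 * (m%:R * D2) * (86 * d%:R ^+ 3) = m%:R * (8 * d%:R ^+ 3 * D2) by field.
  done.
have h2 : 0 <= m%:R * D2 by apply: mulr_ge0; apply: ltW.
rewrite mulNr; lra.
Qed.
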